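(* Let $\mathcal{A}$ be a central hyperplane arrangement in $V=\mathbb{K}^3$. Then $\mathcal{A}$ is factored if and only if it is hereditarily factored, and $\mathcal{A}$ is inductively factored if and only if it is hereditarily inductively factored.
   Context: $\mathbb{K}$ is a field; a central arrangement is a finite set of linear hyperplanes; $\Phi_\ell$ the empty arrangement in an $\ell$-dimensional space. $L(\mathcal{A})$ is the set of intersections of subsets of $\mathcal{A}$ ($V$ included); $\mathcal{A}_X=\{H\in\mathcal{A}\mid X\subseteq H\}$, $\mathcal{A}^X=\{X\cap H\mid H\in\mathcal{A}\setminus\mathcal{A}_X\}$. A partition $\pi=(\pi_1,\ldots,\pi_s)$ of $\mathcal{A}$ is nice if it is independent (for all choices $H_i\in\pi_i$, $\operatorname{codim}(H_1\cap\cdots\cap H_s)=s$) and for each $X\in L(\mathcal{A})\setminus\{V\}$ some non-empty $\pi_i\cap\mathcal{A}_X$ is a singleton; $\mathcal{A}$ is factored if it has a nice partition (the empty partition is nice for an empty arrangement). For $H_0\in\pi_1$: $\mathcal{A}'=\mathcal{A}\setminus\{H_0\}$, $\mathcal{A}''=\mathcal{A}^{H_0}$, $\pi'$ the partition of $\mathcal{A}'$ by the non-empty $\pi_i\cap\mathcal{A}'$, $\mathrm{R}:\mathcal{A}\setminus\pi_1\to\mathcal{A}''$, $H\mapsto H\cap H_0$, $\pi''=(\mathrm{R}(\pi_2),\ldots,\mathrm{R}(\pi_s))$. The class of inductively factored pairs is the smallest class of pairs $(\mathcal{A},\pi)$ containing $(\Phi_\ell,\text{empty partition})$ for all $\ell$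 and containing $(\mathcal{A},\pi)$ whenever there is $H_0\in\pi_1$ with $\mathrm{R}$ bijective and $(\mathcal{A}',\pi')$, $(\mathcal{A}'',\pi'')$ in the class; $\mathcal{A}$ is inductively factored if some $(\mathcal{A},\pi)$ is in it. $\mathcal{A}$ is hereditarily (inductively) factored if $\mathcal{A}^X$ is (inductively) factored for every $X\in L(\mathcal{A})$. *)

(* Defs.v *)
From HB Require Import structures.
From mathcomp Require Import all_boot all_order all_algebra.
From mathcomp Require Import finmap.

Set Implicit Arguments.
Unset Strict Implicit.
Unset Printing Implicit Defensive.

Import GRing.Theory.
Local Open Scope fset_scope.
Local Open Scope ring_scope.

(* A central arrangement is modelled inside a fixed finite-dimensional K-vector
   space vT: its ambient space is a subspace W : {vspace vT}, and it is a finite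
   set of linear hyperplanes of W (subspaces of W of codimension one in W). *)

Section Arrangements.
Variables (K : fieldType) (vT : vectType K).

Definition subsp := {vspace vT}.

Definition is_hyperplane (W H : subsp) : bool :=
  (H <= W)%VS && ((\dim H).+1 == \dim W)%N.

Definition is_arrangement (W : subsp) (A : {fset subsp}) : Prop :=
  forall H, H \in A -> is_hyperplane W H.

Definition meet (W : subsp) (s : seq subsp) : subsp :=
  foldr (fun H X => (H :&: X)%VS) W s.

Definition in_L (W : subsp) (A : {fset subsp}) (X : subsp) : Prop :=
  exists S : {fset subsp}, S `<=` A /\ X = meet W S.

Definition localization (A : {fset subsp}) (X : subsp) : {fset subsp} :=
  [fset H in A | (X <= H)%VS].

(* A^X, an arrangement in the ambient space X *)
Definition restriction (A : {fset subsp}) (X : subsp) : {fset subsp} :=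
  [fset (X :&: H)%VS | H in A & ~~ (X <= H)%VS].

Definition is_partition (A : {fset subsp}) (pi : seq {fset subsp}) : Prop :=
  (forall i, (i < size pi)%N -> nth fset0 pi i != fset0) /\
  (forall i j, (i < size pi)%N -> (j < size pi)%N -> i <> j ->
      [disjoint nth fset0 pi i & nth fset0 pi j]) /\
  (forall H, H \in A <-> exists2 i, (i < size pi)%N & H \in nth fset0 pi i).

Definition codim (W X : subsp) : nat := (\dim W - \dim X)%N.

Definition independent (W : subsp) (pi : seq {fset subsp}) : Prop :=
  forall hs : seq subsp, size hs = size pi ->
    (forall i, (i < size pi)%N -> nth 0%VS hs i \in nth fset0 pi i) ->
    codim W (meet W hs) = size pi.

Definition nice (W : subsp) (A : {fset subsp}) (pi : seq {fset subsp}) : Prop :=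
  is_partition A pi /\ independent W pi /\
  forall X, in_L W A X -> X <> W ->
    exists2 i, (i < size pi)%N &
      #|` (nth fset0 pi i `&` localization A X)| = 1%N.

Definition factored (W : subsp) (A : {fset subsp}) : Prop :=
  exists pi, nice W A pi.

(* The restriction map R : A \ pi_i -> A^{H0}, H |-> H cap H0, is bijective *)
Definition R_bijective (A B : {fset subsp}) (H0 : subsp) : Prop :=
  (forall H1 H2, H1 \in A `\` B -> H2 \in A `\` B ->
      (H0 :&: H1)%VS = (H0 :&: H2)%VS -> H1 = H2) /\
  (forall Y, Y \in restriction A H0 ->
      exists2 H, H \in A `\` B & Y = (H0 :&: H)%VS).

Definition pi_del (pi : seq {fset subsp}) (H0 : subsp) : seq {fset subsp} :=
  [seq B <- [seq B `\ H0 | B <- pi] | B != fset0].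

Definition pi_res (pi : seq {fset subsp}) (i : nat) (H0 : subsp)
  : seq {fset subsp} :=
  [seq [fset (H0 :&: H)%VS | H in B] | B <- take i pi ++ drop i.+1 pi].

(* The distinguished block "pi_1" containing H0 may be any block of pi (the
   labelling of the blocks is immaterial). *)
Inductive ind_factored_pair : subsp -> {fset subsp} -> seq {fset subsp} -> Prop :=
  | IFP_empty (W : subsp) : ind_factored_pair W fset0 [::]
  | IFP_step (W : subsp) (A : {fset subsp}) (pi : seq {fset subsp})
      (i : nat) (H0 : subsp) :
      is_arrangement W A -> is_partition A pi ->
      (i < size pi)%N -> H0 \in nth fset0 pi i ->
      R_bijective A (nth fset0 pi i) H0 ->
      ind_factored_pair W (A `\ H0) (pi_del pi H0) ->
      ind_factored_pair H0 (restriction A H0) (pi_res pi i H0) ->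
      ind_factored_pair W A pi.

Definition ind_factored (W : subsp) (A : {fset subsp}) : Prop :=
  exists pi, ind_factored_pair W A pi.

Definition hered_factored (W : subsp) (A : {fset subsp}) : Prop :=
  forall X, in_L W A X -> factored X (restriction A X).

Definition hered_ind_factored (W : subsp) (A : {fset subsp}) : Prop :=
  forall X, in_L W A X -> ind_factored X (restriction A X).

End Arrangements.

(* Main.v *)
Require Import Defs.
From HB Require Import structures.
From mathcomp Require Import all_boot all_order all_algebra.
From mathcomp Require Import finmap.
From mathcomp Require Import zify.
Set Implicit Arguments.
Unset Strict Implicit.
Local Open Scope fset_scope.

Section G.
Variables (K : fieldType) (vT : vectType K).
Implicit Types (X Y h : {vspace vT}) (B C : {fset {vspace vT}}).

Lemma hypP X h : is_hyperplane X h -> (h <= X)%VS /\ (\dim h).+1 = \dim X.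
Proof. by case/andP=> ? /eqP. Qed.

Lemma fset1_n0 h : [fset h] != (fset0 : {fset {vspace vT}}).
Proof. by apply/negP => /eqP e; move: (fset11 h); rewrite e inE. Qed.

Lemma part0 : is_partition (fset0 : {fset {vspace vT}}) [::].
Proof.
split=> //; split=> // H; split; first by rewrite inE.
by case.
Qed.

Lemma part1 B C : C != fset0 -> (forall H, H \in B = (H \in C)) ->
  is_partition B [:: C].
Proof.
move=> nC eB; split; first by case.
split; first by case=> [|i] [|j].
move=> H; rewrite eB; split; first by move=> ?; exists 0%N.
by case=> [[|i]].
Qed.

Lemma part2 B C1 C2 : C1 != fset0 -> C2 != fset0 -> [disjoint C1 & C2] ->
  (forall H, H \in B = (H \in C1) || (H \in C2)) ->
  is_partition B [:: C1; C2].
Proof.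
move=> n1 n2 d eB; split; first by case=> [|[|i]].
split.
  case=> [|[|i]] [|[|j]] //= _ _ _; rewrite fdisjoint_sym //.
move=> H; rewrite eB; split.
  by case/orP=> ?; [exists 0%N | exists 1%N].
by case=> [[|[|i]]] //= _ ->; rewrite ?orbT.
Qed.

Lemma meet_le X (s : seq {vspace vT}) h : h \in s -> (meet X s <= h)%VS.
Proof.
elim: s => // a s IH; rewrite inE => /orP [/eqP ->|hs] /=.
  exact: capvSl.
exact: subv_trans (capvSr _ _) (IH hs).
Qed.

Lemma inL_ne X B Y : in_L X B Y -> Y <> X -> exists2 h, h \in B & (Y <= h)%VS.
Proof.
case=> S [SB ->]; case E: (S : seq _) => [|h s].
  by move=> /(_ erefl).
move=> _; exists h.
  apply: (fsubsetP SB); have: h \in (S : seq _) by rewrite E mem_head.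
  by [].
by apply: meet_le; rewrite mem_head.
Qed.

Section Arr.
Variables (X : {vspace vT}) (B : {fset {vspace vT}}).
Hypothesis (arrB : is_arrangement X B) (dX : (\dim X <= 2)%N).

Lemma AH h : h \in B -> (h <= X)%VS /\ (\dim h).+1 = \dim X.
Proof. by move=> hB; apply: hypP; apply: arrB. Qed.

Lemma F3 h h' : h \in B -> h' \in B -> (h <= h')%VS -> h = h'.
Proof.
move=> /AH [_ d1] /AH [_ d2] le; apply/eqP; rewrite eqEdim le.
have e : \dim h = \dim h' by apply: succn_inj; rewrite d1 d2.
by rewrite e leqnn.
Qed.

Lemma F2 h Y : h \in B -> (Y <= h)%VS -> Y != 0%VS -> Y = h.
Proof.
move=> /AH [_ d1] le nz; apply/eqP; rewrite eqEdim le.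
have : (\dim Y != 0)%N by rewrite dimv_eq0.
move: d1 dX => <-; rewrite /=; move: (\dim h) (\dim Y) => a b; lia.
Qed.

Lemma F1 h h' : h \in B -> h' \in B -> h != h' -> (h :&: h' = 0)%VS.
Proof.
move=> hB h'B ne; apply/eqP; apply/negPn/negP => nz.
have e := F2 hB (capvSl h h') nz.
have : (h <= h')%VS by rewrite -e capvSr.
by move/(F3 hB h'B)/eqP; rewrite (negbTE ne).
Qed.

Lemma dimX2 h h' : h \in B -> h' \in B -> h != h' -> \dim X = 2%N.
Proof.
move=> hB h'B ne; apply/eqP; rewrite eqn_leq dX /=.
move: (hB) (h'B) => /AH [_ d1] /AH [_ d2].
rewrite leqNgt; apply/negP => lt.
have z1 : h = 0%VS by apply/eqP; rewrite -dimv_eq0; move: lt; rewrite -d1; case: (\dim h).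
have z2 : h' = 0%VS by apply/eqP; rewrite -dimv_eq0; move: lt; rewrite -d2; case: (\dim h').
by move: ne; rewrite z1 z2 eqxx.
Qed.

Definition pi2 H1 :=
  if B `\ H1 == fset0 then [:: [fset H1]] else [:: [fset H1]; B `\ H1].

Lemma part_pi2 H1 : H1 \in B -> is_partition B (pi2 H1).
Proof.
move=> H1B; rewrite /pi2; case: ifP => E.
  apply: part1; first exact: fset1_n0.
  move: E; rewrite fsetD_eq0 => /fsubsetP E H.
  apply/idP/idP; first by move/E.
  by move/fset1P ->.
apply: part2; [exact: fset1_n0| by rewrite E | |].
  by apply/fdisjointP => x /fset1P ->; rewrite !inE eqxx.
move=> H; rewrite !inE; case: (H =P H1) => [->|] //=; by rewrite H1B.
Qed.

Lemma indep_pi2 H1 : H1 \in B -> independent X (pi2 H1).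
Proof.
move=> H1B hs; rewrite /pi2; case: ifP => E.
  case: hs => [|a [|]] // _ /(_ 0%N isT) /fset1P /= ->.
  have [le d] := AH H1B.
  rewrite /codim /= (capv_idPl le); move: d => <-; lia.
case: hs => [|a [|b [|]]] // _ hh.
have /fset1P /= -> := hh 0%N isT.
have /fsetD1P [ne bB] := hh 1%N isT.
have [le d] := AH bB.
rewrite /codim /= (capv_idPl le) capvC (F1 bB H1B ne) dimv0 subn0.
exact: dimX2 bB H1B ne.
Qed.

Lemma nice_pi2 H1 : H1 \in B -> forall Y, in_L X B Y -> Y <> X ->
  exists2 i, (i < size (pi2 H1))%N &
    #|` (nth fset0 (pi2 H1) i `&` localization B Y)| = 1%N.
Proof.
move=> H1B Y /inL_ne hY /hY [h hB Yh].
case: (boolP (Y <= H1)%VS) => YH1.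
  exists 0%N; first by rewrite /pi2; case: ifP.
  have e0 : nth fset0 (pi2 H1) 0 = [fset H1] by rewrite /pi2; case: ifP.
  have -> : nth fset0 (pi2 H1) 0 `&` localization B Y = [fset H1].
    rewrite e0; apply/fsetP => x; rewrite /localization !inE /=.
    by case: (x =P H1) => [->|] //=; rewrite H1B YH1.
  exact: cardfs1.
have Y0 : Y != 0%VS by apply: contraNneq YH1 => ->; exact: sub0v.
have eY := F2 hB Yh Y0; subst Y.
have ne : h != H1 by apply: contraNneq YH1 => ->; exact: subvv.
have E : (B `\ H1 == fset0) = false.
  by apply/negbTE; apply/fset0Pn; exists h; rewrite !inE ne hB.
exists 1%N; first by rewrite /pi2 E.
have -> : nth fset0 (pi2 H1) 1 `&` localization B h = [fset h].
  rewrite /pi2 E /=; apply/fsetP => x; rewrite /localization !inE /=.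
  apply/idP/idP.
    case/andP => /andP [xne xB] /andP [_ hx]; apply/eqP; symmetry.
    exact: F3 hB xB hx.
  by move/eqP ->; rewrite ne hB subvv.
exact: cardfs1.
Qed.

Lemma fact_small : factored X B.
Proof.
case: (fset_0Vmem B) => [E|[H1 H1B]].
  exists [::]; split; first by rewrite E; exact: part0.
  split; first by case=> // _ _; rewrite /codim subnn.
  by move=> Y /inL_ne hY /hY [h]; rewrite E inE.
exists (pi2 H1); split; first exact: part_pi2.
by split; [exact: indep_pi2 | exact: nice_pi2].
Qed.

End Arr.
Lemma pi_del_cons (a : {fset {vspace vT}}) l H0 :
  pi_del (a :: l) H0 = if a `\ H0 != fset0 then a `\ H0 :: pi_del l H0 else pi_del l H0.
Proof. by []. Qed.
Lemma pi_del_nil H0 : pi_del (Nil {fset {vspace vT}}) H0 = [::].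
Proof. by []. Qed.

Lemma mem_restr (B : {fset {vspace vT}}) X H : H \in B -> ~~ (X <= H)%VS ->
  (X :&: H)%VS \in restriction B X.
Proof. by move=> HB nle; apply/imfsetP; exists H => //=; rewrite inE /= HB. Qed.

Lemma ind_pt Y : \dim Y = 1%N -> ind_factored_pair Y [fset 0%VS] [:: [fset 0%VS]].
Proof.
move=> dY.
have R0 : restriction [fset (0 : {vspace vT})%VS] 0%VS = fset0.
  apply/fsetP => Z; rewrite inE; apply/negbTE/negP.
  by case/imfsetP => H /= /andP [_]; rewrite sub0v.
apply: (@IFP_step _ _ Y _ _ 0%N 0%VS).
- by move=> H /fset1P ->; rewrite /is_hyperplane sub0v dimv0 dY.
- by apply: part1; [exact: fset1_n0 | by []].
- by [].
- exact: fset11.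
- split; first by move=> H1 H2; rewrite fsetDv inE.
  by move=> Z; rewrite R0 inE.
- rewrite /pi_del /= fsetDv eqxx /=; exact: IFP_empty.
- rewrite R0 /=; exact: IFP_empty.
Qed.

Lemma ind_small_n n : forall X B H1, is_arrangement X B -> (\dim X <= 2)%N ->
  #|` B| = n -> H1 \in B -> ind_factored_pair X B (pi2 B H1).
Proof.
elim: n => [|n IH] X B H1 arrB dX cB H1B.
  by move: cB; rewrite (cardfsD1 H1) H1B.
have hp := part_pi2 H1B.
rewrite /pi2 in hp *; case: ifP => E; rewrite E in hp.
  have eB : B `\ H1 = fset0 by apply/eqP.
  have R0 : restriction B H1 = fset0.
    apply/fsetP => Z; rewrite inE; apply/negbTE/negP.
    case/imfsetP => H /= /andP [HB nle] _.
    case: (H =P H1) => [eH|neH]; first by move: nle; rewrite eH subvv.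
    have : H \in B `\ H1 by rewrite !inE HB andbT; apply/eqP.
    by rewrite eB inE.
  apply: (@IFP_step _ _ X B _ 0%N H1) => //.
  - exact: fset11.
  - split; first by move=> H2 H3; rewrite /= eB inE.
    by move=> Z; rewrite R0 inE.
  - rewrite eB /pi_del /= fsetDv eqxx /=; exact: IFP_empty.
  - rewrite R0 /=; exact: IFP_empty.
have [H0 H0in] : exists H0, H0 \in B `\ H1.
  by apply/fset0Pn; rewrite E.
have /fsetD1P [ne01 H0B] := H0in.
have ne10 : H1 != H0 by rewrite eq_sym.
have d2 := dimX2 arrB dX H0B H1B ne01.
have memD : forall x, x \in B `\` (B `\ H1) -> x = H1.
  move=> x; rewrite !inE; case: (x =P H1) => // _ /=; by case: (x \in B).
apply: (@IFP_step _ _ X B _ 1%N H0) => //.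
- split; first by move=> a b ha hb _; rewrite (memD _ ha) (memD _ hb).
  move=> Z /imfsetP [H /= /andP [HB nle] ->].
  have neH : H0 != H by apply: contraNneq nle => <-; exact: subvv.
  exists H1; first by rewrite !inE eqxx H1B.
  by rewrite (F1 arrB dX H0B HB neH) (F1 arrB dX H0B H1B ne01).
- have e1 : [fset H1] `\ H0 = [fset H1].
    apply/fsetP => x; rewrite in_fsetD1 in_fset1.
    by case: (x =P H1) => [->|_]; [rewrite ne10 | rewrite andbF].
  have e2 : (B `\ H1) `\ H0 = (B `\ H0) `\ H1.
    by rewrite !fsetDDl; congr (_ `\` _); apply: fsetUC.
  have -> : pi_del [:: [fset H1]; B `\ H1] H0 = pi2 (B `\ H0) H1.
    rewrite pi_del_cons e1 (fset1_n0 H1) pi_del_cons pi_del_nil e2 /pi2.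
    by case: ((B `\ H0) `\ H1 =P fset0).
  apply: IH.
  + by move=> H /fsetD1P [_ HB]; apply: arrB.
  + exact: dX.
  + by move: cB; rewrite (cardfsD1 H0) H0B => -[].
  + by rewrite !inE ne10 H1B.
- have ez : [fset (H0 :&: H)%VS | H in [fset H1]] = [fset 0%VS].
    apply/fsetP => Z; apply/imfsetP/fset1P => [[H /fset1P -> ->] | ->].
      by rewrite (F1 arrB dX H0B H1B ne01).
    by exists H1; [exact: fset11 | rewrite (F1 arrB dX H0B H1B ne01)].
  have er : restriction B H0 = [fset 0%VS].
    apply/fsetP => Z; apply/imfsetP/fset1P => [[H /= /andP [HB nle] ->] | ->].
      have neH : H0 != H by apply: contraNneq nle => <-; exact: subvv.
      by rewrite (F1 arrB dX H0B HB neH).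
    exists H1; last by rewrite (F1 arrB dX H0B H1B ne01).
    rewrite inE /= H1B /=; apply/negP => le.
    by move: ne01; rewrite (F3 arrB H0B H1B le) eqxx.
  rewrite /pi_res /= ez er; apply: ind_pt.
  have [_ d] := AH arrB H0B; rewrite d2 in d; by case: d.
Qed.

Lemma ind_small X B : is_arrangement X B -> (\dim X <= 2)%N -> ind_factored X B.
Proof.
move=> arrB dX; case: (fset_0Vmem B) => [->|[H1 H1B]].
  by exists [::]; exact: IFP_empty.
by exists (pi2 B H1); apply: (@ind_small_n #|` B|).
Qed.

Lemma restr_arr (A : {fset {vspace vT}}) X : is_arrangement fullv A ->
  is_arrangement X (restriction A X).
Proof.
move=> arrA Y /imfsetP [H]; rewrite inE /= => /andP [HA nle] ->.
have [_ dH] := hypP (arrA _ HA).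
have s1 : (H <= X + H)%VS by exact: addvSr.
have dS : \dim (X + H) = \dim (fullv : {vspace vT}).
  apply/eqP; rewrite eqn_leq dimvS ?subvf //= -dH ltnNge; apply/negP => le.
  have eq : (H == X + H)%VS by rewrite eqEdim s1 le.
  by move: nle; rewrite (eqP eq) addvSl.
have := dimv_sum_cap X H; rewrite dS -dH.
by rewrite /is_hyperplane capvSl /= => e; apply/eqP; lia.
Qed.

Lemma restr_full (A : {fset {vspace vT}}) : is_arrangement fullv A ->
  restriction A fullv = A.
Proof.
move=> arrA; apply/fsetP => H; apply/imfsetP/idP.
  by case=> H'; rewrite inE /= => /andP [H'A _] ->; rewrite capfv.
move=> HA; exists H; last by rewrite capfv.
rewrite inE /= HA /=; apply/negP => le.
have [_ dH] := hypP (arrA _ HA).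
by move: (dimvS le); rewrite -dH ltnn.
Qed.

End G.

Theorem lemma3p26 (K : fieldType) (A : {fset {vspace 'rV[K]_3}}) :
  is_arrangement fullv A ->
  (factored fullv A <-> hered_factored fullv A) /\
  (ind_factored fullv A <-> hered_ind_factored fullv A).
Proof.
move=> arrA.
have d3 : \dim (fullv : {vspace 'rV[K]_3}) = 3%N by rewrite dimvf dim_matrix.
have key : forall X : {vspace 'rV[K]_3}, X <> fullv -> (\dim X <= 2)%N.
  move=> X ne; have : (X == fullv) = false by apply/eqP.
  by rewrite eqEdim subvf /= d3 leqNgt => /negbFE.
have eR := restr_full arrA.
have inLf : in_L fullv A fullv by exists fset0; split; [exact: fsub0set | by []].
split; split.
- move=> fA X _; case: (X =P fullv) => [->|ne]; first by rewrite eR.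
  have a := @restr_arr _ _ A X arrA; have b := key X ne.
  have := fact_small a b. exact.
- by move=> h; rewrite -eR; apply: h.
- move=> fA X _; case: (X =P fullv) => [->|ne]; first by rewrite eR.
  have a := @restr_arr _ _ A X arrA; have b := key X ne.
  have := ind_small a b. exact.
- by move=> h; rewrite -eR; apply: h.
Qed.
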